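(* Let $S$ be a reflective numerical semigroup with $\mathrm{g}(S)=g\ge1$ and $\mathrm{m}(S)=a$, and let $r\in\{1,\dots,a-1\}$ be the integer with $g\equiv r\pmod a$ (such $r$ exists since $a\nmid g$). Then $\mathrm{F}(S)=2g-r$.
   Context: A numerical semigroup is a submonoid $S$ of $(\mathbb{N}_0,+)$ with finite complement. Its set of gaps is $\mathrm{H}(S)=\mathbb{N}_0\setminus S$, its genus is $\mathrm{g}(S)=\#\mathrm{H}(S)$, its Frobenius number (when $\mathrm{g}(S)\ge1$) is $\mathrm{F}(S)=\max \mathrm{H}(S)$, and its multiplicity $\mathrm{m}(S)$ is the smallest positive element of $S$. A numerical semigroup $S$ of genus $g\ge1$ is called reflective if for every $z\in\{0,1,\dots,g-1\}$ exactly one of $z$ and $z+g$ belongs to $S$. *)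

(* Defs.v *)
From mathcomp Require Import all_boot.
Set Implicit Arguments. Unset Strict Implicit. Unset Printing Implicit Defensive.

Definition numerical_semigroup (S : pred nat) : Prop :=
  [/\ S 0,
      (forall x y, S x -> S y -> S (x + y)) &
      exists N, forall n, N <= n -> S n].

Definition genus_is (S : pred nat) (g : nat) : Prop :=
  exists N, (forall n, N <= n -> S n) /\ count (predC S) (iota 0 N) = g.

Definition frobenius_is (S : pred nat) (F : nat) : Prop :=
  ~~ S F /\ (forall n, F < n -> S n).

Definition multiplicity_is (S : pred nat) (m : nat) : Prop :=
  [/\ 0 < m, S m & forall n, 0 < n < m -> ~~ S n].

Definition reflective (S : pred nat) (g : nat) : Prop :=
  forall z, z < g -> S z (+) S (z + g).

(* Main.v *)
Require Import Defs.
From mathcomp Require Import all_boot.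
From mathcomp Require Import zify.

Lemma count_pair (S : pred nat) g :
  (forall z, z < g -> S z (+) S (z + g)) ->
  count (predC S) (iota 0 (2 * g)) = g.
Proof.
move=> H.
have -> : 2 * g = g + g by rewrite mul2n addnn.
rewrite iotaD count_cat add0n.
have -> : iota g g = map (addn g) (iota 0 g) by rewrite -iotaDl addn0.
rewrite count_map -count_predUI.
rewrite (eq_in_count (a1 := predU (predC S) (preim (addn g) (predC S))) (a2 := predT)); last first.
  move=> z; rewrite mem_iota add0n => /andP[_ zg].
  have := H z zg; rewrite /= addnC; by case: (S z); case: (S (g + z)).
rewrite (eq_in_count (a1 := predI (predC S) (preim (addn g) (predC S))) (a2 := pred0)); last first.
  move=> z; rewrite mem_iota add0n => /andP[_ zg].
  have := H z zg; rewrite /= addnC; by case: (S z); case: (S (g + z)).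
by rewrite count_predT count_pred0 size_iota addn0.
Qed.

Theorem mainTheorem3 (S : pred nat) (g a r F : nat) :
  numerical_semigroup S ->
  genus_is S g -> 1 <= g ->
  multiplicity_is S a ->
  reflective S g ->
  1 <= r <= a - 1 -> g = r %[mod a] ->
  frobenius_is S F ->
  F = 2 * g - r.
Proof.
move=> [S0 Sadd _] [N [HN HC]] g1 [a0 Sa Ha] Hr /andP[r1 ra] gr [SF HF].
have big : forall n, 2 * g <= n -> S n.
  move=> n ng; case Sn: (S n) => //.
  have nN : n < N by case: (leqP N n) => // /HN; rewrite Sn.
  move: HC.
  have -> : N = 2 * g + (N - 2 * g) by lia.
  rewrite iotaD count_cat count_pair // add0n.
  have : 0 < count (predC S) (iota (2 * g) (N - 2 * g)).
    rewrite -has_count; apply/hasP; exists n; last by rewrite /= Sn.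
    rewrite mem_iota; lia.
  lia.
have F2g : F < 2 * g by case: (leqP (2 * g) F) => // /big; rewrite (negbTE SF).
have Sg : ~~ S g by have := Hr 0 g1; rewrite S0 add0n.
have gF : g <= F by case: (leqP g F) => // /HF; rewrite (negbTE Sg).
have gapdown : forall z, S z -> S (z + a) by move=> z Sz; exact: Sadd.
have key : forall z, z < g -> ~~ S (z + g) -> a %| z.
  elim/ltn_ind => z IH zg Sz.
  have Sz' : S z by move: (Hr z zg) Sz; case: (S z); case: (S (z + g)).
  case: (ltnP z a) => za.
    case: (posnP z) => [-> | zp]; first by rewrite dvdn0.
    by have := Ha z; rewrite zp za Sz' => /(_ isT).
  have : a %| z - a.
    apply: IH; [lia | lia |].
    apply: contra Sz => Sz2.
    have := gapdown _ Sz2; have -> : z - a + g + a = z + g by lia. done.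
  by move=> h; rewrite -(subnK za) dvdn_add // dvdnn.
have am : a %| F - g by apply: key; [lia | have -> : F - g + g = F by lia].
have mag : g <= F - g + a.
  case: (leqP g (F - g + a)) => // h.
  have Sm : S (F - g).
    have fg : F - g < g by lia.
    have e : F - g + g = F by lia.
    by have := Hr _ fg; rewrite e (negbTE SF) addbF.
  have Sma : S (F - g + a) by exact: gapdown.
  have := Hr _ h; rewrite Sma /= => Sg2.
  by have := HF (F - g + a + g) ltac:(lia); rewrite (negbTE Sg2).
move: am => /dvdnP [k hk].
set r' := 2 * g - F.
have gE : g = k * a + r' by rewrite /r'; lia.
have r'a : r' < a.
  case: (ltnP r' a) => // h; have ea : r' = a by lia.
  move: gr; rewrite gE ea -mulSnr modnMl => /esym.
  rewrite modn_small; lia.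
have : r' = r.
  move: gr; rewrite gE modnMDl modn_small // modn_small //; lia.
rewrite /r'; lia.
Qed.
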